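(* Let $R$ be a commutative ring with ${\rm char}(R)\neq 2$ and $R_2\neq\{0\}$, and let $G$ be a non-abelian group with classical involution $*$ (the $R$-linear map on $RG$ with $g\mapsto g^{-1}$ for $g\in G$). Then $(RG)^-_*$ is commutative if and only if one of the following holds: \begin{enumerate} \item $G=K\rtimes\langle x\rangle$, where $K=\langle g\in G\mid g^2\neq 1\rangle$ is abelian, $x^2=1$, $xkx=k^{-1}$ for all $k\in K$, and $R_2^2=\{0\}$; \item ${\rm char}(R)=4$, $G$ has exponent $4$, $G'$ is cyclic of order $2$, $G/G'$ is an elementary abelian $2$-group, and, if $R_2^2\neq\{0\}$, elements of order $2$ in $G$ commute with each other. \end{enumerate}
   Context: $(RG)^-_*=\{\alpha\in RG\mid \alpha^*=-\alpha\}$; $R_2=\{r\in R\mid 2r=0\}$; $R_2^2=\{0\}$ means $r_1r_2=0$ for all $r_1,r_2\in R_2$. $G'$ is the commutator subgroup of $G$. *)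

(* Defs.v *)
(* Arbitrary (possibly infinite) groups are modelled by
   mathcomp's [groupType] (boot/monoid.v); the group ring RG is modelled by
   formal finite sums (lists of coefficient/group-element pairs), compared
   through their coefficient functions. *)
From HB Require Import structures.
From mathcomp Require Import all_boot all_order all_algebra.
Set Implicit Arguments. Unset Strict Implicit. Unset Printing Implicit Defensive.
Import GRing.Theory.
Local Open Scope ring_scope.

Section GroupRing.
Variables (R : comNzRingType) (G : groupType).

Definition grelt := seq (R * G).

Definition gr_coef (a : grelt) (g : G) : R := \sum_(p <- a | p.2 == g) p.1.

Definition gr_eq (a b : grelt) : Prop := forall g, gr_coef a g = gr_coef b g.

Definition gr_mul (a b : grelt) : grelt :=
  [seq (p.1 * q.1, (p.2 * q.2)%g) | p <- a, q <- b].

Definition gr_star (a : grelt) : grelt := [seq (p.1, (p.2)^-1%g) | p <- a].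

Definition gr_skew (a : grelt) : Prop :=
  forall g, gr_coef (gr_star a) g = - gr_coef a g.

Definition skew_commutative : Prop :=
  forall a b, gr_skew a -> gr_skew b -> gr_eq (gr_mul a b) (gr_mul b a).

End GroupRing.

Definition char_is (R : nzRingType) (n : nat) : Prop :=
  if n == 0%N then forall m : nat, (0 < m)%N -> m%:R != 0 :> R
  else (n%:R == 0 :> R) /\ forall m : nat, (0 < m < n)%N -> m%:R != 0 :> R.

Definition R2 (R : nzRingType) (r : R) : Prop := r *+ 2 = 0.

Definition R2sq_zero (R : nzRingType) : Prop :=
  forall r s : R, R2 r -> R2 s -> r * s = 0.

Definition R2_nonzero (R : nzRingType) : Prop := exists r : R, R2 r /\ r != 0.

Section Groups.
Variable G : groupType.
Local Open Scope group_scope.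

Inductive gen (P : G -> Prop) : G -> Prop :=
| gen_base g : P g -> gen P g
| gen_one : gen P 1
| gen_inv g : gen P g -> gen P g^-1
| gen_mul g h : gen P g -> gen P h -> gen P (g * h).

Definition abelian_group : Prop := forall g h : G, g * h = h * g.

Definition abelian_sub (P : G -> Prop) : Prop :=
  forall g h, P g -> P h -> g * h = h * g.

Definition Ksub : G -> Prop := gen (fun g : G => g ^+ 2 <> 1).

Definition derived : G -> Prop := gen (fun c : G => exists a b : G, c = [~ a, b]).

Definition exponent_is (n : nat) : Prop :=
  (0 < n)%N /\ (forall g : G, g ^+ n = 1) /\
  forall m, (0 < m < n)%N -> exists g : G, g ^+ m <> 1.

Definition case1_group : Prop :=
  abelian_sub Ksub /\
  exists x : G,
    x ^+ 2 = 1 /\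
    (forall k, Ksub k -> x * k * x = k^-1) /\
    (forall k g, Ksub k -> Ksub (k ^ g)) /\
    (forall g, Ksub g -> (exists n, g = x ^+ n) -> g = 1) /\
    (forall g, exists k n, Ksub k /\ g = k * x ^+ n).

Definition derived_cyclic_order2 : Prop :=
  exists c : G, c <> 1 /\ (forall g, derived g <-> g = 1 \/ g = c).

Definition quotient_elem_abelian2 : Prop :=
  (forall g h : G, derived [~ g, h]) /\ (forall g : G, derived (g ^+ 2)).

Definition order2 (g : G) : Prop := g <> 1 /\ g ^+ 2 = 1.

Definition order2_commute : Prop :=
  forall g h : G, order2 g -> order2 h -> g * h = h * g.

End Groups.

(* Main.v *)
Require Import Defs.
From HB Require Import structures.
From mathcomp Require Import all_boot all_order all_algebra.
From Stdlib Require Import Classical Ring.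
Set Implicit Arguments. Unset Strict Implicit. Unset Printing Implicit Defensive.

Section Grp.
Variable G : groupType.
Local Open Scope group_scope.
Implicit Types a b g h k x y z w u v : G.

Lemma ne_of x y : x != y -> x <> y. Proof. by move/eqP. Qed.

Lemma inv_self h : h ^+ 2 = 1 -> h^-1 = h.
Proof. by rewrite expg2 => /mulg1_eq. Qed.

Lemma sq_eq h : h ^+ 2 = h * h. Proof. exact: expg2. Qed.

Definition LB := forall g h : G, g ^+ 2 <> 1 -> h ^+ 2 = 1 ->
  h * g = g * h \/ h * g = g^-1 * h.
Definition LA4 := forall g h : G, g ^+ 2 <> 1 -> h ^+ 2 <> 1 -> g * h <> h * g ->
  g * h = g^-1 * h^-1 /\ g * h = h * g^-1 /\ g * h = h^-1 * g.
Definition NIcomm := forall g h : G, g ^+ 2 <> 1 -> h ^+ 2 <> 1 -> g * h = h * g.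

Lemma exists_pair : NIcomm -> LB -> ~ abelian_group G ->
  exists h g, h ^+ 2 = 1 /\ g ^+ 2 <> 1 /\ h * g <> g * h.
Proof.
move=> HK HB nab.
have [g0 [h0 ne]] : exists g h, g * h <> h * g.
  apply: NNPP => H; apply: nab => g h; apply: NNPP => H2; apply: H; by exists g, h.
have [Eg|Eg] := eqVneq (g0 ^+ 2) 1; have [Eh|Eh] := eqVneq (h0 ^+ 2) 1.
- have [Ew|Ew] := eqVneq ((g0 * h0) ^+ 2) 1.
    exfalso; apply: ne.
    move: (inv_self Ew); rewrite invgM (inv_self Eh) (inv_self Eg) => <- //.
  exists h0, (g0 * h0); split => //; split; first exact/eqP.
  move=> E; apply: ne.
  have : h0 * (g0 * h0) * h0 = g0 * h0 * h0 * h0 by rewrite E.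
  by rewrite -!mulgA -[h0 * h0]expg2 Eh !mulg1 => ->.
- exists g0, h0; split => //; split; first exact/eqP.
  by move=> E; apply: ne.
- exists h0, g0; split => //; split; first exact/eqP.
  by move=> E; apply: ne.
- by exfalso; apply: ne; apply: HK; apply/eqP.
Qed.

Lemma inv_flip a b : a * b = b^-1 * a -> b * a = a * b^-1.
Proof.
move=> E; apply: (mulgI b^-1); rewrite mulKg mulgA -E -mulgA mulgV mulg1 //.
Qed.

Lemma gen_comm_base : NIcomm -> forall k y, k ^+ 2 <> 1 -> Ksub y -> k * y = y * k.
Proof.
move=> HK k y Hk; elim => [g Pg| |g _ IH|g h' _ IH1 _ IH2].
- exact: HK.
- by rewrite mulg1 mul1g.
- exact: commuteV.
- exact: commuteM.
Qed.

Lemma K_abelian : NIcomm -> abelian_sub (@Ksub G).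
Proof.
move=> HK x y Hx Hy; elim: Hx => [g Pg| |g _ IH|g h' _ IH1 _ IH2].
- exact: gen_comm_base.
- by rewrite mulg1 mul1g.
- apply: commute_sym; apply: commuteV; exact: commute_sym.
- apply: commute_sym; apply: commuteM; exact: commute_sym.
Qed.

Lemma hpow h n : h ^+ 2 = 1 -> h ^+ n = 1 \/ h ^+ n = h.
Proof.
move=> Hh; elim: n => [|n [IH|IH]]; first by left.
- by right; rewrite expgS IH mulg1.
- by left; rewrite expgS IH -expg2.
Qed.

Lemma sqM_comm a b : a * b = b * a -> (a * b) ^+ 2 = a ^+ 2 * b ^+ 2.
Proof. by move=> E; rewrite expgMn. Qed.

Lemma branch1 : NIcomm -> LB -> ~ abelian_group G -> case1_group G.
Proof.
move=> HK HB nab; have [h [g [Hh [Hg ne]]]] := exists_pair HK HB nab.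
have hg : h * g = g^-1 * h by case: (HB g h Hg Hh).
have hh : h * h = 1 by rewrite -expg2.
have hinv : forall k, k ^+ 2 <> 1 -> h * k = k^-1 * h.
  move=> k Hk; case: (HB k h Hk Hh) => // hk; exfalso.
  have Hhk : (h * k) ^+ 2 <> 1 by rewrite sqM_comm // Hh mul1g.
  have c1 := HK _ _ Hhk Hg; have c2 := HK _ _ Hk Hg.
  apply: ne; apply: (mulIg k).
  by rewrite -mulgA -c2 mulgA c1 mulgA.
have Kab := K_abelian HK.
split => //; exists h; split => //; split.
  move=> k; elim => [x Px| |x Kx IH|x y Kx IH1 Ky IH2].
  - by rewrite hinv // -mulgA hh mulg1.
  - by rewrite mulg1 hh invg1.
  - have E : (h * x * h)^-1 = h * x^-1 * h by rewrite !invgM !(inv_self Hh) mulgA.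
    by rewrite -E IH.
  - have -> : h * (x * y) * h = (h * x * h) * (h * y * h).
      by rewrite -!mulgA; congr (_ * _); rewrite (mulgA h h) hh mul1g.
    by rewrite IH1 IH2 -invgM Kab.
split.
  move=> k x; elim => [y Py| |y _ IH|y z _ IH1 _ IH2].
  - apply: gen_base; rewrite -conjXg => /eqP; rewrite conjg_eq1 => /eqP //.
  - rewrite conj1g; exact: gen_one.
  - rewrite conjVg; exact: gen_inv.
  - rewrite conjMg; exact: gen_mul.
split.
  move=> y Ky [n En]; case: (hpow n Hh) => E; first by rewrite En.
  exfalso; apply: ne; rewrite En E in Ky; exact: (Kab _ _ Ky (gen_base Hg)).
have cK : forall w, w * g = g * w -> Ksub w.
  move=> w E; have [Ew|Ew] := eqVneq (w ^+ 2) 1; last by apply: gen_base; apply/eqP.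
  have Kwg : Ksub (w * g) by apply: gen_base; rewrite sqM_comm // Ew mul1g.
  have -> : w = (w * g) * g^-1 by rewrite mulgK.
  by apply: gen_mul => //; apply: gen_inv; apply: gen_base.
move=> y; have [Ey|Ey] := eqVneq (y ^+ 2) 1; last first.
  by exists y, 0%N; split; [apply: gen_base; apply/eqP | rewrite mulg1].
case: (HB g y Hg Ey) => E.
  by exists y, 0%N; split; [exact: cK | rewrite mulg1].
exists (y * h), 1%N; split; last by rewrite expg1 -mulgA hh mulg1.
apply: cK; by rewrite -mulgA hg mulgA -(inv_flip E) -!mulgA.
Qed.

Lemma PL u v : LA4 -> u ^+ 2 <> 1 -> v ^+ 2 <> 1 -> u * v <> v * u ->
  u * u = v * v /\ u * u * (u * u) = 1 /\ u ^ v = u^-1.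
Proof.
move=> HA Hu Hv ne; have [E1 [E2 E3]] := HA u v Hu Hv ne.
have cj : u ^ v = u^-1 by rewrite conjgE E2 mulKg.
have uu : u * u = v^-1 * v^-1.
  apply: (mulIg v); rewrite -mulgA E1 mulgA mulgV mul1g -mulgA mulVg mulg1 //.
have uu' : u * u = (v * v)^-1 by rewrite uu invgM.
have cz : (u * u) ^ v = u * u.
  by rewrite {1}uu conjgE -!mulgA mulVg mulg1 uu.
have z2 : u * u * (u * u) = 1.
  have : u^-1 * u^-1 = u * u by rewrite -cj -conjMg cz.
  move=> E; rewrite -{2}E -mulgA (mulgA u u^-1) mulgV mul1g mulgV //.
split; last by split.
have -> : v * v = (u * u)^-1 by rewrite uu' invgK.
by symmetry; apply: mulg1_eq.
Qed.

Lemma branch2 a b : LA4 -> LB -> a ^+ 2 <> 1 -> b ^+ 2 <> 1 -> a * b <> b * a ->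
  exponent_is G 4 /\ derived_cyclic_order2 G /\ quotient_elem_abelian2 G.
Proof.
move=> HA HB Ha Hb ne.
have [ab [zz cab]] := PL HA Ha Hb ne.
set z := a * a in ab zz cab.
have zinv : z^-1 = z by apply: mulg1_eq.
have z1 : z <> 1 by rewrite /z -expg2.
have sq : forall g, g * g = 1 \/ g * g = z.
  move=> g; have [Eg|Eg] := eqVneq (g ^+ 2) 1; first by left; rewrite -expg2.
  have Eg' : g ^+ 2 <> 1 by apply/eqP.
  have [ga|ga] := eqVneq (g * a) (a * g); last first.
    by right; have [-> _] := PL HA Eg' Ha (ne_of ga).
  have [gb|gb] := eqVneq (g * b) (b * g); last first.
    by right; have [-> _] := PL HA Eg' Hb (ne_of gb); rewrite ab.
  have gab : g * a * b <> b * (g * a).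
    by move=> E; apply: ne; apply: (mulgI g); rewrite !mulgA E mulgA gb.
  have sqga : (g * a) * (g * a) = g * g * z.
    by rewrite /z -!mulgA (mulgA a g) -ga !mulgA.
  have [Ega|Ega] := eqVneq ((g * a) ^+ 2) 1.
    right; move: Ega; rewrite expg2 sqga => E.
    by rewrite -zinv -(mulg1_eq E) invgK.
  have [E _] := PL HA (ne_of Ega) Hb gab.
  exfalso; apply: Eg'; rewrite expg2.
  by apply: (mulIg z); rewrite mul1g -sqga E -ab.
have aconj : forall g, a ^ g = a \/ a ^ g = a^-1.
  move=> g; have [Eg|Eg] := eqVneq (g ^+ 2) 1.
    case: (HB a g Ha Eg) => E.
      by left; rewrite conjgE -E mulKg.
    by right; rewrite conjgE (inv_flip E) mulKg.
  have [ag|ag] := eqVneq (a * g) (g * a).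
    by left; rewrite conjgE ag mulKg.
  by right; have [_ [_ ->]] := PL HA Ha (ne_of Eg) (ne_of ag).
have zc : forall g, z * g = g * z.
  move=> g; rewrite conjgC; congr (_ * _).
  rewrite /z conjMg; case: (aconj g) => -> //.
  by rewrite -invgM.
have helper : forall g h, g ^+ 2 <> 1 -> g ^ h = g^-1 -> [~ g, h] = z.
  move=> g h Hg E; rewrite commgEl E -invgM.
  by case: (sq g) => [E'|->] //; exfalso; apply: Hg; rewrite expg2.
have comm : forall g h, [~ g, h] = 1 \/ [~ g, h] = z.
  move=> g h; have [gh|gh] := eqVneq (g * h) (h * g).
    by left; apply/eqP/commgP.
  have gh' : g * h <> h * g by apply/eqP.
  have [Eg|Eg] := eqVneq (g ^+ 2) 1; have [Eh|Eh] := eqVneq (h ^+ 2) 1.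
  - have [Egh|Egh] := eqVneq ((g * h) ^+ 2) 1.
      exfalso; apply: gh'; move: (inv_self Egh).
      by rewrite invgM (inv_self Eh) (inv_self Eg).
    right; rewrite commgEl conjgE (inv_self Eg) (inv_self Eh).
    case: (sq (g * h)) => E.
      by exfalso; move/eqP: Egh; rewrite expg2.
    by rewrite -E !mulgA.
  - right; rewrite -invgR.
    case: (HB h g (ne_of Eh) Eg) => E; first by exfalso; apply: gh'.
    rewrite (helper h g (ne_of Eh)) //.
    by rewrite conjgE (inv_flip E) mulKg.
  - right; case: (HB g h (ne_of Eg) Eh) => E; first by exfalso; apply: gh'.
    apply: (helper g h (ne_of Eg)).
    by rewrite conjgE (inv_flip E) mulKg.
  - right; have [E _] := PL HA (ne_of Eg) (ne_of Eh) gh'.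
    have [_ [_ E']] := PL HA (ne_of Eg) (ne_of Eh) gh'.
    exact: helper (ne_of Eg) E'.
have der : forall g, derived g <-> g = 1 \/ g = z.
  move=> g; split.
    elim => [c [x [y ->]]| |x _ IH|x y _ IH1 _ IH2].
    - exact: comm.
    - by left.
    - by case: IH => ->; [left; rewrite invg1 | right; exact: zinv].
    - case: IH1 => ->; case: IH2 => ->; rewrite ?mul1g ?mulg1; try by [left|right].
  case=> ->; first exact: gen_one.
  apply: gen_base; exists a, b.
  by rewrite commgEl cab -invgM.
split.
  split => //; split.
    move=> g; rewrite (_ : 4 = 2 + 2)%N // expgnDr expg2.
    by case: (sq g) => ->; rewrite ?mul1g // -{1}zinv mulVg.
  move=> m /andP [m0 m4].
  exists a; case: m m0 m4 => [|[|[|[|m]]]] // _ _.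
  - by rewrite expg1 => E; apply: Ha; rewrite E expg1n.
  - move=> E; apply: Ha.
    have h1 : a ^+ 4 = a by rewrite (_ : 4 = 1 + 3)%N // expgnDr E mulg1 expg1.
    have h2 : a ^+ 4 = 1 by rewrite (_ : 4 = 2 + 2)%N // expgnDr expg2 zz.
    by rewrite -h1 h2 expg1n.
split.
  by exists z; split.
split => g.
  by move=> h; apply: gen_base; exists g, h.
by apply/der; rewrite expg2; case: (sq g) => ->; [left|right].
Qed.


Definition C4 g h := g * h = g^-1 * h^-1 /\ g * h = h * g^-1 /\ g * h = h^-1 * g /\
  g * h^-1 = g^-1 * h /\ g * h^-1 = h * g /\ g * h^-1 = h^-1 * g^-1.

Lemma case1_local : case1_group G -> NIcomm /\ LB.
Proof.
move=> [Kab [x [x2 [xk [_ [_ dec]]]]]].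
have NI : NIcomm by move=> g h Hg Hh; apply: Kab; apply: gen_base.
split => // g h Hg Hh.
have [k [n [Kk ->]]] := dec h.
case: (hpow n x2) => ->.
  by left; rewrite mulg1; apply: Kab => //; apply: gen_base.
right.
have xg : x * g = g^-1 * x.
  by rewrite -(xk g (gen_base Hg)) -mulgA -expg2 x2 mulg1.
rewrite -mulgA xg !mulgA; congr (_ * _).
apply: Kab => //; apply: gen_inv; exact: gen_base.
Qed.

Lemma derived_conj g y : derived g -> derived (g ^ y).
Proof.
elim => [c [a [b ->]]| |x _ IH|x z _ IH1 _ IH2].
- by apply: gen_base; exists (a ^ y), (b ^ y); rewrite conjRg.
- rewrite conj1g; exact: gen_one.
- rewrite conjVg; exact: gen_inv.
- rewrite conjMg; exact: gen_mul.
Qed.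

Lemma case2_local : derived_cyclic_order2 G -> quotient_elem_abelian2 G ->
  LB /\ (forall g h, g ^+ 2 <> 1 -> h ^+ 2 <> 1 -> g * h = h * g \/ C4 g h).
Proof.
move=> [c [c1 Dc]] [Dcomm Dsq].
have cc : c * c = 1.
  have : derived (c * c) by apply: gen_mul; apply/Dc; right.
  move/Dc => [] // E; exfalso; apply: c1; apply: (mulgI c); rewrite mulg1 //.
have cinv : c^-1 = c by apply: mulg1_eq.
have cz : forall y, c * y = y * c.
  move=> y; rewrite conjgC; congr (_ * _).
  have : derived (c ^ y) by apply: derived_conj; apply/Dc; right.
  move/Dc => [] // /eqP; rewrite conjg_eq1 => /eqP //.
have sqc : forall g, g ^+ 2 <> 1 -> g^-1 = g * c.
  move=> g Hg; have [] := proj1 (Dc _) (Dsq g) => E; first by exfalso.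
  by apply: (mulgI g); rewrite mulgV mulgA -expg2 E cc.
have cm : forall g h, g * h = h * g \/ g * h = h * g * c.
  move=> g h; have [] := proj1 (Dc _) (Dcomm g h) => E.
    by left; apply/commgP/eqP.
  by right; rewrite -E -commgC.
split.
  move=> g h Hg Hh; case: (cm g h) => E; first by left.
  right; rewrite (sqc g Hg) -mulgA cz mulgA E -!mulgA cc mulg1 //.
move=> g h Hg Hh; case: (cm g h) => E; first by left.
right.
have hg : h * g = g * h * c.
  by rewrite E -!mulgA cc mulg1.
have gi := sqc g Hg; have hi := sqc h Hh.
rewrite /C4 gi hi.
have ch := cz h; have cg := cz g.
have e1 : g * c * (h * c) = g * h.
  by rewrite -!mulgA (mulgA c h) ch -mulgA cc mulg1.
have e2 : h * (g * c) = g * h by rewrite mulgA hg -mulgA cc mulg1.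
have e3 : h * c * g = g * h by rewrite -mulgA cg mulgA hg -mulgA cc mulg1.
have e4 : g * c * h = g * (h * c) by rewrite -mulgA ch.
have e5 : g * (h * c) = h * g by rewrite hg mulgA.
have e6 : h * c * (g * c) = h * g.
  by rewrite -!mulgA (mulgA c g) cg -mulgA cc mulg1.
by rewrite e1 e2 e3 e4 e5 e6.
Qed.
End Grp.

From Stdlib Require Import Ring.
Import GRing.Theory.
Local Open Scope ring_scope.

Section RingTac.
Variable R : comNzRingType.
Definition rT := GRing.ComNzRing.sort R.
Definition radd (x y : rT) : rT := x + y.
Definition rmul (x y : rT) : rT := x * y.
Definition ropp (x : rT) : rT := - x.
Definition rzero : rT := 0.
Definition rone : rT := 1.
Lemma RthR : @ring_theory rT rzero rone radd rmul (fun x y => radd x (ropp y)) ropp eq.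
Proof.
rewrite /radd/rmul/ropp/rzero/rone.
split; [exact: add0r|exact: addrC|exact: addrA|exact: mul1r|exact: mulrC|exact: mulrA|exact: mulrDl|by []|exact: subrr].
Qed.
Definition rnat (n : nat) : rT := n%:R.
Lemma rnatE (n : nat) : n%:R = rnat n :> R. Proof. by []. Qed.
Lemma RthR' : @ring_theory (GRing.ComNzRing.sort R) rzero rone radd rmul (fun x y => radd x (ropp y)) ropp eq.
Proof. exact: RthR. Qed.
Lemma req_fix (x y : rT) : @eq rT (radd x rzero) (radd y rzero) -> x = y.
Proof. by rewrite /radd/rzero !addr0. Qed.
Lemma raddE (x y : R) : x + y = radd x y. Proof. by []. Qed.
Lemma rmulE (x y : R) : x * y = rmul x y. Proof. by []. Qed.
Lemma roppE (x : R) : - x = ropp x. Proof. by []. Qed.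
Lemma rzeroE : 0 = rzero :> R. Proof. by []. Qed.
Lemma roneE : 1 = rone :> R. Proof. by []. Qed.
End RingTac.

Section GR.
Variables (R : comNzRingType) (G : groupType).
Implicit Types (a b s t : grelt R G) (u g h : G).
Add Ring Rring : (RthR R).
Ltac rring := rewrite ?rnatE ?raddE ?rmulE ?roppE ?rzeroE ?roneE;
  match goal with |- @eq _ ?x ?y => apply: (@req_fix R x y) end; ring.

Lemma test_rring (r s : R) (b : bool) : r * s + r * - s * (b%:R) = r * s * (1 - b%:R).
Proof. rring. Qed.

Lemma coef_nil u : gr_coef ([::] : grelt R G) u = 0.
Proof. by rewrite /gr_coef big_nil. Qed.

Lemma coef_cons p a u : gr_coef (p :: a) u = (if p.2 == u then p.1 else 0) + gr_coef a u.
Proof. by rewrite /gr_coef big_cons; case: ifP => _; rewrite ?add0r. Qed.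

Lemma coef_cat a b u : gr_coef (a ++ b) u = gr_coef a u + gr_coef b u.
Proof. by rewrite /gr_coef big_cat. Qed.

Lemma ifE (b : bool) (c : R) : (if b then c else 0) = c * b%:R.
Proof. by case: b; rewrite ?mulr1 ?mulr0. Qed.

Lemma eq_mulgV g h u : ((g * h)%g == u) = (h == (g^-1 * u)%g).
Proof. by apply/eqP/eqP => [<-|->]; rewrite ?mulKg ?mulVKg. Qed.

Lemma eq_mulgV2 g h u : ((g * h)%g == u) = (g == (u * h^-1)%g).
Proof. by apply/eqP/eqP => [<-|->]; rewrite ?mulgK ?mulgVK. Qed.

Lemma coefL2 a b u :
  gr_coef (gr_mul a b) u = \sum_(p <- a) p.1 * gr_coef b ((p.2)^-1 * u)%g.
Proof.
elim: a => [|p a IH]; first by rewrite /gr_mul /= coef_nil big_nil.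
rewrite big_cons -IH /gr_mul /= coef_cat; congr (_ + _).
rewrite /gr_coef big_map big_distrr /=; apply: eq_bigl => q /=.
exact: eq_mulgV.
Qed.

Lemma coefL1 a b u :
  gr_coef (gr_mul a b) u = \sum_(q <- b) gr_coef a (u * (q.2)^-1)%g * q.1.
Proof.
rewrite coefL2 /gr_coef.
transitivity (\sum_(p <- a) \sum_(q <- b)
   (if q.2 == ((p.2)^-1 * u)%g then p.1 * q.1 else 0)).
  apply: eq_bigr => p _; rewrite big_distrr big_mkcond /=.
  by apply: eq_bigr => q _; case: ifP; rewrite ?mulr0.
rewrite exchange_big /=; apply: eq_bigr => q _.
rewrite big_distrl /= [X in _ = X]big_mkcond /=.
elim: a => [|p a IH]; first by rewrite !big_nil.
rewrite !big_cons IH; congr (_ + _).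
by rewrite -eq_mulgV eq_mulgV2; case: ifP; rewrite ?mul0r.
Qed.

Lemma coef_star a u : gr_coef (gr_star a) u = gr_coef a u^-1.
Proof. by rewrite /gr_coef big_map; apply: eq_bigl => p /=; rewrite eqg_invLR. Qed.


Definition CM a b := forall u, gr_coef (gr_mul a b) u = gr_coef (gr_mul b a) u.

Lemma CM_sym a b : CM a b -> CM b a.
Proof. by move=> H u; rewrite H. Qed.

Lemma CM_zero a b : (forall u, gr_coef a u = 0) -> CM a b.
Proof.
move=> H u; rewrite coefL1 coefL2 !big1 // => p _; by rewrite H ?mulr0 ?mul0r.
Qed.

Lemma CM_ext a a' b : (forall u, gr_coef a u = gr_coef a' u) -> CM a' b -> CM a b.
Proof.
move=> H C u.
have -> : gr_coef (gr_mul a b) u = gr_coef (gr_mul a' b) u.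
  by rewrite !coefL1; apply: eq_bigr => q _; rewrite H.
have -> : gr_coef (gr_mul b a) u = gr_coef (gr_mul b a') u.
  by rewrite !coefL2; apply: eq_bigr => q _; rewrite H.
exact: C.
Qed.

Lemma CM_cat a1 a2 b : CM a1 b -> CM a2 b -> CM (a1 ++ a2) b.
Proof.
move=> C1 C2 u; rewrite coefL2 coefL1 !big_cat /= -coefL2 -coefL1 -coefL2 -coefL1.
by rewrite C1 C2.
Qed.

Definition at1 (r : R) g : grelt R G := [:: (r, g)].
Definition at2 (r : R) g : grelt R G := [:: (r, g); (- r, g^-1%g)].

Definition atom t := (exists r g, (g ^+ 2)%g = 1%g /\ r *+ 2 = 0 /\ t = at1 r g) \/
                     (exists r g, (g ^+ 2)%g <> 1%g /\ t = at2 r g).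

Lemma skew_coef a : gr_skew a <-> forall u, gr_coef a u^-1 = - gr_coef a u.
Proof. by split => H u; move: (H u); rewrite coef_star. Qed.

Lemma coef_filter (P : pred G) a u :
  gr_coef (filter (fun q => P q.2) a) u = if P u then gr_coef a u else 0.
Proof.
rewrite /gr_coef big_filter_cond.
case: ifP => Pu.
  by apply: eq_bigl => q; case: (q.2 =P u) => [->|]; rewrite ?Pu ?andbF.
by rewrite big_pred0 // => q; case: (q.2 =P u) => [->|]; rewrite ?Pu ?andbF.
Qed.

Lemma decomp a : gr_skew a -> (forall u, gr_coef a u = 0) \/
  exists t a', atom t /\ gr_skew a' /\ (size a' < size a)%N /\
    forall u, gr_coef a u = gr_coef (t ++ a') u.
Proof.
case: a => [|p s] Ha; first by left => u; rewrite coef_nil.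
right; set a := p :: s in Ha *; set g := p.2; set al := gr_coef a.
have sk := proj1 (skew_coef a) Ha.
set P := fun v : G => (v != g) && (v != g^-1%g).
set a' := filter (fun q => P q.2) a.
have ca' : forall u, gr_coef a' u = if P u then al u else 0 by move=> u; exact: coef_filter.
have sa' : gr_skew a'.
  apply/skew_coef => u; rewrite !ca'.
  have -> : P u^-1%g = P u by rewrite /P eqg_invLR (eqg_invLR u) invgK andbC.
  by case: ifP; rewrite ?oppr0 // => _; exact: sk.
have sz : (size a' < size a)%N.
  rewrite /a' size_filter /= /P /g eqxx /=.
  exact: (leq_ltn_trans (count_size _ _)).
have [Eg|Eg] := eqVneq (g ^+ 2)%g 1%g.
  have gi : g^-1%g = g by apply: mulg1_eq; rewrite -expg2.
  exists (at1 (al g) g), a'; split.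
    left; exists (al g), g; split => //; split => //.
    by rewrite mulr2n; apply/eqP; rewrite addr_eq0; apply/eqP; rewrite -sk gi.
  split => //; split => // u.
  rewrite coef_cat ca' /at1 coef_cons coef_nil /P gi.
  case: (eqVneq g u) => [<-|gu].
    by rewrite /= !addr0.
  by rewrite /= !add0r.
exists (at2 (al g) g), a'; split.
  by right; exists (al g), g; split => //; apply/eqP.
split => //; split => // u.
rewrite coef_cat ca' /at2 !coef_cons coef_nil /P.
have gig : (g^-1 == g)%g = false.
  apply/eqP => E; move/eqP: Eg; apply; by rewrite expg2 -{1}E mulVg.
case: (eqVneq g u) => [<-|gu].
  by rewrite /= gig /= !addr0.
case: (eqVneq g^-1%g u) => [<-|giu].
  by rewrite /= add0r !addr0; exact: sk.
by rewrite /= !add0r.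
Qed.

Lemma skew_ind (Q : grelt R G -> Prop) :
  (forall a, (forall u, gr_coef a u = 0) -> Q a) ->
  (forall t a' a, atom t -> Q a' -> (forall u, gr_coef a u = gr_coef (t ++ a') u) -> Q a) ->
  forall a, gr_skew a -> Q a.
Proof.
move=> H0 HS a; move: {2}(size a) (leqnn (size a)) => n; elim: n a => [|n IH] a le Ha.
  by apply: H0; case: a le Ha => // _ _ u; rewrite coef_nil.
case: (decomp Ha) => [|[t [a' [At [Sa' [sz E]]]]]]; first exact: H0.
apply: (HS t a') => //; apply: IH => //; rewrite -ltnS; exact: (leq_trans sz le).
Qed.

Lemma back_main : (forall t1 t2, atom t1 -> atom t2 -> CM t1 t2) ->
  forall a b, gr_skew a -> gr_skew b -> CM a b.
Proof.
move=> HAt.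
have Hl : forall t b, atom t -> gr_skew b -> CM t b.
  move=> t b At; move: b; apply: skew_ind.
    by move=> b Hb; apply: CM_sym; apply: CM_zero.
  move=> t' b' b At' C E; apply: CM_sym; apply: (CM_ext E); apply: CM_cat.
    by apply: CM_sym; apply: HAt.
  exact: CM_sym.
move=> a b Ha Hb; move: a Ha; apply: skew_ind.
  by move=> a H; apply: CM_zero.
move=> t a' a At C E; apply: (CM_ext E); apply: CM_cat => //; exact: Hl.
Qed.

Lemma eq_diff (x y k t : R) : t = 0 -> x - y = k * t -> x = y.
Proof. by move=> t0 E; apply/eqP; rewrite -subr_eq0 E t0 mulr0. Qed.

Lemma cm11 (r s : R) g h : r * s = 0 \/ (g * h = h * g)%g -> CM (at1 r g) (at1 s h).
Proof.
move=> H u; rewrite /gr_mul /= !coef_cons !coef_nil /= !ifE.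
case: H => [rs0|->]; last by rring.
by rewrite (mulrC s r) rs0 !mul0r.
Qed.

Lemma cm21 (r s : R) g h : s *+ 2 = 0 ->
  (h * g = g * h)%g \/ (h * g = g^-1 * h)%g -> CM (at2 r g) (at1 s h).
Proof.
move=> s2 H u; rewrite /gr_mul /= !coef_cons !coef_nil /= !ifE.
case: H => E.
  have E' : (h * g^-1 = g^-1 * h)%g by apply: commuteV.
  by rewrite E E'; rring.
have E' := inv_flip E.
rewrite E' E.
apply: (@eq_diff _ _ (r * ((((h * g^-1)%g == u) : nat)%:R - (((g^-1 * h)%g == u) : nat)%:R)) (s + s)).
  by rewrite -mulr2n.
rring.
Qed.

Lemma cm22 (r s : R) g h : (g * h = h * g)%g \/ ((1 + 1 + 1 + 1 : R) = 0 /\ C4 g h) ->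
  CM (at2 r g) (at2 s h).
Proof.
move=> H u; rewrite /gr_mul /= !coef_cons !coef_nil /= !ifE.
case: H => [E|[four [e1 [e2 [e3 [e4 [e5 e6]]]]]]].
  have E1 : (h * g^-1 = g^-1 * h)%g by apply: commuteV; apply: commute_sym.
  have E2 : (h^-1 * g = g * h^-1)%g by apply: commute_sym; apply: commuteV.
  have E3 : (h^-1 * g^-1 = g^-1 * h^-1)%g.
    by apply: commuteV; apply: commute_sym; apply: commuteV.
  by rewrite -E E1 E2 E3; rring.
rewrite -e1 -e2 -e3 -e4 -e5 -e6.
apply: (@eq_diff _ _ (r * s * ((((g * h)%g == u) : nat)%:R - (((g * h^-1)%g == u) : nat)%:R)) (1 + 1 + 1 + 1)) => //.
rring.
Qed.

Definition HCcond := forall g h (r s : R), (g ^+ 2 = 1)%g -> (h ^+ 2 = 1)%g ->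
  r *+ 2 = 0 -> s *+ 2 = 0 -> r * s = 0 \/ (g * h = h * g)%g.

Lemma atoms_CM : (forall g h, (g ^+ 2)%g <> 1%g -> (h ^+ 2)%g <> 1%g ->
     (g * h = h * g)%g \/ ((1 + 1 + 1 + 1 : R) = 0 /\ C4 g h)) ->
  LB G -> HCcond -> forall t1 t2, atom t1 -> atom t2 -> CM t1 t2.
Proof.
move=> HA HB HC t1 t2 [[r [g [Hg [r2 ->]]]]|[r [g [Hg ->]]]] [[s [h [Hh [s2 ->]]]]|[s [h [Hh ->]]]].
- by apply: cm11; apply: HC.
- by apply: CM_sym; apply: cm21 => //; apply: HB.
- by apply: cm21 => //; apply: HB.
- by apply: cm22; apply: HA.
Qed.

Lemma skew_at2 (r : R) g : gr_skew (at2 r g).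
Proof.
apply/skew_coef => u; rewrite /at2 !coef_cons !coef_nil /= !ifE.
rewrite eqg_inv -eqg_invLR; rring.
Qed.

Lemma skew_at1 (r : R) g : (g ^+ 2 = 1)%g -> r *+ 2 = 0 -> gr_skew (at1 r g).
Proof.
move=> Hg r2; apply/skew_coef => u; rewrite /at1 !coef_cons !coef_nil /= !ifE.
have gi : g^-1%g = g by apply: mulg1_eq; rewrite -expg2.
rewrite -eqg_invLR gi; apply: (@eq_diff _ _ ((g == u : nat)%:R) (r + r)); first by rewrite -mulr2n.
rring.
Qed.

Lemma eq_from (x y t : R) : x = y -> t = x - y -> t = 0.
Proof. by move=> -> ->; rewrite subrr. Qed.
Lemma eq_fromN (x y t : R) : x = y -> t = y - x -> t = 0.
Proof. by move=> -> ->; rewrite subrr. Qed.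

Lemma fwdC : skew_commutative R G -> HCcond.
Proof.
move=> SC g h r s Hg Hh r2 s2.
have E := SC _ _ (skew_at1 Hg r2) (skew_at1 Hh s2) (g * h)%g.
move: E; rewrite /gr_mul /= !coef_cons !coef_nil /= eqxx /= !addr0.
case: (_ =P _) => [e|ne] E; first by right; symmetry.
by left.
Qed.

Lemma fwdB (r0 : R) : skew_commutative R G -> r0 *+ 2 = 0 -> r0 != 0 -> LB G.
Proof.
move=> SC r2 nr g h Hg Hh.
have E := SC _ _ (skew_at2 1 g) (skew_at1 Hh r2) (g * h)%g.
have f1 : ((g^-1 * h)%g == (g * h)%g) = false.
  apply/eqP => e; apply: Hg; have gi : (g^-1 = g)%g by apply: (mulIg h).
  by rewrite expg2 -{2}gi mulgV.
move: E; rewrite /gr_mul /= !coef_cons !coef_nil /= eqxx f1 /=.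
case: ((h * g)%g =P (g * h)%g) => [e|ne1]; first by left.
case: ((h * g^-1)%g =P (g * h)%g) => [e|ne2] E.
  right; have e' : (h * g^-1 = (g^-1)^-1 * h)%g by rewrite invgK.
  by have := inv_flip e'; rewrite invgK => ->.
exfalso; move/eqP: nr; apply; apply: (eq_from E); rring.
Qed.

Lemma fwdA (r0 : R) : skew_commutative R G -> r0 *+ 2 = 0 -> r0 != 0 ->
  (1 + 1 : R) <> 0 -> LB G ->
  forall g h, (g ^+ 2)%g <> 1%g -> (h ^+ 2)%g <> 1%g -> (g * h)%g <> (h * g)%g ->
  (1 + 1 + 1 + 1 : R) = 0 /\
  (g * h = g^-1 * h^-1 /\ g * h = h * g^-1 /\ g * h = h^-1 * g)%g.
Proof.
move=> SC r2 nr n2 HB.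
have n1 : (1 : R) <> 0 by apply/eqP; exact: oner_neq0.
have n3 : (1 + 1 + 1 : R) <> 0.
  move=> e; move/eqP: nr; apply.
  have -> : r0 = r0 * (1 + 1 + 1) - r0 *+ 2 by rewrite mulr2n; rring.
  by rewrite e r2 mulr0 subrr.
move=> g h Hg Hh ne.
have E := SC _ _ (skew_at2 1 g) (skew_at2 1 h) (g * h)%g.
have f1 : ((g * h^-1)%g == (g * h)%g) = false.
  apply/eqP => e; apply: Hh; have hi : (h^-1 = h)%g by apply: (mulgI g).
  by rewrite expg2 -{2}hi mulgV.
have f2 : ((g^-1 * h)%g == (g * h)%g) = false.
  apply/eqP => e; apply: Hg; have gi : (g^-1 = g)%g by apply: (mulIg h).
  by rewrite expg2 -{2}gi mulgV.
have f3 : ((h * g)%g == (g * h)%g) = false by apply/eqP => e; apply: ne.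
move: E; rewrite /gr_mul /= !coef_cons !coef_nil /= eqxx f1 f2 f3 /=.
case: ((g^-1 * h^-1)%g =P (g * h)%g) => e1;
case: ((h * g^-1)%g =P (g * h)%g) => e2;
case: ((h^-1 * g)%g =P (g * h)%g) => e3;
case: ((h^-1 * g^-1)%g =P (g * h)%g) => e4 E.
all: try (exfalso; first
  [ apply: n1; apply: (eq_from E); rring
  | apply: n1; apply: (eq_fromN E); rring
  | apply: n2; apply: (eq_from E); rring
  | apply: n2; apply: (eq_fromN E); rring
  | apply: n3; apply: (eq_from E); rring
  | apply: n3; apply: (eq_fromN E); rring ]).
  split; first by apply: (eq_from E); rring.
  by rewrite e1 e2 e3.
exfalso.
have w2 : ((g * h) ^+ 2 = 1)%g.
  by rewrite expg2 -{2}e4 -!mulgA (mulgA h) mulgV mul1g mulgV.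
case: (HB g (g * h)%g Hg w2) => e.
  apply: ne; symmetry; apply: (mulgI g); by rewrite mulgA e.
have e' : (g * h * g = h)%g by rewrite e mulKg.
apply: Hh; rewrite expg2 -{1}e' -mulgA -expg2 //.
Qed.

Lemma three_nz (r0 : R) : r0 *+ 2 = 0 -> r0 != 0 -> (1 + 1 + 1 : R) <> 0.
Proof.
move=> r2 nr e; move/eqP: nr; apply.
have -> : r0 = r0 * (1 + 1 + 1) - r0 *+ 2 by rewrite mulr2n; rring.
by rewrite e r2 mulr0 subrr.
Qed.

Lemma nat4 : (4%:R : R) = 1 + 1 + 1 + 1.
Proof. by rewrite !mulrS mulr0n; rring. Qed.
Lemma nat3 : (3%:R : R) = 1 + 1 + 1.
Proof. by rewrite !mulrS mulr0n; rring. Qed.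
Lemma nat2 : (2%:R : R) = 1 + 1.
Proof. by rewrite !mulrS mulr0n; rring. Qed.
End GR.

Theorem corollary2p6 (R : comNzRingType) (G : groupType) :
  ~ char_is R 2 -> R2_nonzero R -> ~ abelian_group G ->
  (skew_commutative R G <->
     (case1_group G /\ R2sq_zero R)
     \/ (char_is R 4 /\ exponent_is G 4 /\ derived_cyclic_order2 G /\
         quotient_elem_abelian2 G /\ (~ R2sq_zero R -> order2_commute G))).
Proof.
move=> nc2 [r0 [r2 nr]] nab.
have n1 : (1 : R) <> 0 by apply/eqP; exact: oner_neq0.
have n2 : (1 + 1 : R) <> 0.
  move=> e; apply: nc2; rewrite /char_is /=; split; first by rewrite nat2 e.
  by case=> [|[|m]] //= _; apply/eqP.
have n3 := three_nz r2 nr.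
split.
  move=> SC.
  have HB := fwdB SC r2 nr.
  have HC := fwdC SC.
  case: (classic (NIcomm G)) => NI.
    left; split; first exact: branch1 NI HB nab.
    move=> s t Rs Rt.
    have [h [g [Hh [Hg ne]]]] := exists_pair NI HB nab.
    have hg : (h * g = g^-1 * h)%g by case: (HB g h Hg Hh).
    have hh : (h * h = 1)%g by rewrite -expg2.
    have w : ((h * g) ^+ 2 = 1)%g.
      by rewrite expg2 mulgA hg -(mulgA g^-1%g h h) hh mulg1 mulVg.
    case: (HC h (h * g)%g s t Hh w Rs Rt) => // e; exfalso.
    move: e; rewrite mulgA hh mul1g hg -mulgA hh mulg1 => e.
    by apply: Hg; rewrite expg2 {2}e mulgV.
  have [g [h [Hg [Hh ne]]]] : exists g h : G, (g ^+ 2)%g <> 1%g /\ (h ^+ 2)%g <> 1%g /\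
      (g * h)%g <> (h * g)%g.
    apply: NNPP => H; apply: NI => g h Hg Hh; apply: NNPP => ne.
    by apply: H; exists g, h.
  have LA : LA4 G.
    by move=> x y Hx Hy nxy; exact: (fwdA SC r2 nr n2 HB Hx Hy nxy).2.
  have four := (fwdA SC r2 nr n2 HB Hg Hh ne).1.
  have [ex [dc qe]] := branch2 LA HB Hg Hh ne.
  right; split.
    rewrite /char_is /=; split; first by rewrite nat4 four.
    by case=> [|[|[|[|m]]]] //= _; apply/eqP; rewrite ?nat2 ?nat3.
  do 3 (split => //).
  move=> nRz x y [x1 x2] [y1 y2].
  have [s [t [Rs [Rt nst]]]] : exists s t : R, R2 s /\ R2 t /\ s * t <> 0.
    apply: NNPP => H; apply: nRz => s t Rs Rt; apply: NNPP => nst.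
    by apply: H; exists s, t.
  by case: (HC x y s t x2 y2 Rs Rt).
case=> [[C1 Rz] | [c4 [ex [dc [qe o2]]]]].
  have [NI HB] := case1_local C1.
  move=> a b Ha Hb; apply: back_main => //; apply: atoms_CM => //.
    by move=> g h Hg Hh; left; apply: NI.
  by move=> g h r s _ _ r2' s2'; left; apply: Rz.
have [HB HA] := case2_local dc qe.
have four : (1 + 1 + 1 + 1 : R) = 0.
  by move: c4; rewrite /char_is /= => [[/eqP e _]]; rewrite -nat4.
move=> a b Ha Hb; apply: back_main => //; apply: atoms_CM => //.
  by move=> g h Hg Hh; case: (HA g h Hg Hh) => [e|e]; [left|right].
move=> g h r s Hg Hh r2' s2'.
case: (classic (R2sq_zero R)) => [Rz|nRz]; first by left; apply: Rz.
right; have [->|g1] := eqVneq g 1%g; first by rewrite mul1g mulg1.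
have [->|h1] := eqVneq h 1%g; first by rewrite mul1g mulg1.
by apply: o2 => //; split => //; apply/eqP.
Qed.
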